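(* Let $G=(V,E)$ be a directed graph whose edges are given on the external tape of a RATM-BIO as adjacency lists. Then the worst-case external access trace complexity of the DFS-Random Access algorithm (described in the context) executed on a RATM-BIO is $O(|V||E|)$.
   Context: A RATM-BIO (random access Turing machine with blocking IO) has a main memory tape with its address tape and an external memory tape with its address tape; a main head with random access on the main tape (jumping in one step to the cell whose index is on the main address tape when entering a random access state) and an external head that moves only one cell at a time on the external tape. Transitions are main memory computation transitions (main head moves, external head halts), external memory access transitions (external head moves one step, main head halts), and read/write transitions: on entering a read (write) state an external address is written, the main head halts and the external head moves step by step to the designated external cell; when reached, the content of that cell replaces (is replaced by) the content of the main memory cell under the main head, and main memory computation resumes. The external access trace complexity is the total number of moves of the external head. Semi-external setting: main memory has size $O(|V|)$; it holds an array $free[\cdot]$ indexed by vertices and a stack. DFS-Random Access algorithm: set $free[u]=1$ for all vertices $u$; for each vertex $u$: push $u$ on an empty stack; while the stack is nonempty, pop $v$; if $free[v]=1$, set $free[v]=0$ and, for each neighbor $w$ of $v$ (its adjacency list read from the external tape, in whatever order vertices are processed), if $free[w]=1$ push $w$. *)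

(* Defs.v *)
(* Abstract model of the DFS-Random Access algorithm on a
   RATM-BIO, tracking only the external head movement. *)
From mathcomp Require Import all_boot.
Set Implicit Arguments. Unset Strict Implicit. Unset Printing Implicit Defensive.

Section DFSRA.
Variables (V : finType) (adj : V -> seq V).

Definition nedges : nat := \sum_(v : V) size (adj v).

Definition dist (m n : nat) : nat := (m - n) + (n - m).

(* External tape: the adjacency lists stored consecutively, in the vertex
   order [ord] (cells indexed from 0). *)
Variable ord : seq V.
Definition ext_tape : seq V := flatten [seq adj u | u <- ord].

Definition list_start (v : V) : nat :=
  sumn [seq size (adj u) | u <- take (index v ord) ord].

Definition list_addrs (v : V) : seq nat := iota (list_start v) (size (adj v)).

(* Read transitions on the addresses [addrs], one after the other, starting
   with the external head on cell [pos]; each read moves the head step by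
   step to the target cell.  Returns (final head position, number of head
   moves, contents read).  [x0] is a dummy default for out-of-range cells. *)
Fixpoint read_cells (x0 : V) (pos : nat) (addrs : seq nat)
  : nat * nat * seq V :=
  match addrs with
  | [::] => (pos, 0, [::])
  | a :: rest =>
      let: (p, c, ws) := read_cells x0 a rest in
      (p, dist pos a + c, nth x0 ext_tape a :: ws)
  end.

Definition unmark (free : {ffun V -> bool}) (v : V) : {ffun V -> bool} :=
  [ffun x => if x == v then false else free x].

(* State: (free array, external head position, accumulated head moves).
   Inner while loop "while the stack is nonempty", with [fuel] bounding the
   number of pops.  The stack is a list whose head is the top. *)
Fixpoint dfs_loop (fuel : nat) (free : {ffun V -> bool}) (stack : seq V)
  (pos cost : nat) : {ffun V -> bool} * nat * nat :=
  match fuel with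
  | 0 => (free, pos, cost)
  | f.+1 =>
    match stack with
    | [::] => (free, pos, cost)
    | v :: st =>
      if free v then
        let free' := unmark free v in
        let: (pos', c, ns) := read_cells v pos (list_addrs v) in
        dfs_loop f free' (rev [seq w <- ns | free' w] ++ st) pos' (cost + c)
      else dfs_loop f free st pos cost
    end
  end.

Definition dfs_ra_state (outer : seq V) (fuel : nat) : {ffun V -> bool} * nat * nat :=
  foldl (fun s u => let: (free, pos, cost) := s in dfs_loop fuel free [:: u] pos cost)
        ([ffun => true], 0, 0) outer.

(* external access trace complexity: total number of external head moves *)
Definition dfs_ra_trace (outer : seq V) (fuel : nat) : nat :=
  (dfs_ra_state outer fuel).2.

End DFSRA.

(* Main.v *)
Require Import Defs.
From mathcomp Require Import all_boot.
From mathcomp Require Import zify.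

Section Proof.
Variables (V : finType) (adj : V -> seq V) (ord : seq V).
Hypothesis pord : perm_eq ord (enum V).
Let N := nedges adj.

Lemma sumn_ord : sumn [seq size (adj u) | u <- ord] = N.
Proof.
rewrite /N /nedges sumnE big_map (perm_big _ pord).
by rewrite big_enum.
Qed.

Lemma list_end v : list_start adj ord v + size (adj v) <= N.
Proof.
have vin : v \in ord by rewrite (perm_mem pord) mem_enum.
rewrite -sumn_ord /list_start.
rewrite -[in X in _ <= X](cat_take_drop (index v ord).+1 ord) map_cat sumn_cat.
rewrite (take_nth v); last by rewrite index_mem.
rewrite nth_index // -cats1 map_cat sumn_cat /=.
lia.
Qed.

Lemma read_iota x0 m : forall s pos, exists ws,
  read_cells adj ord x0 pos (iota s m.+1) = (s + m, dist pos s + m, ws).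
Proof.
elim: m => [|m IH] s pos.
  by eexists; rewrite /= addn0 addn0.
have [ws E] := IH s.+1 s.
exists (nth x0 (ext_tape adj ord) s :: ws).
have -> : read_cells adj ord x0 pos (iota s m.+2) =
  (let: (p,c,ws) := read_cells adj ord x0 s (iota s.+1 m.+1) in
     (p, dist pos s + c, nth x0 (ext_tape adj ord) s :: ws)) by [].
rewrite E.
have -> : s.+1 + m = s + m.+1 by lia.
have -> : dist pos s + (dist s s.+1 + m) = dist pos s + m.+1.
  rewrite /dist; lia.
reflexivity.
Qed.

Lemma read_bound v pos : pos <= N ->
  (read_cells adj ord v pos (list_addrs adj ord v)).1.1 <= N /\
  (read_cells adj ord v pos (list_addrs adj ord v)).1.2 <= 2 * N.
Proof.
move=> hp; have he := list_end v.
rewrite /list_addrs.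
case En: (size (adj v)) he => [|m] he.
  by rewrite /=; split; lia.
have [ws ->] := read_iota v m (list_start adj ord v) pos.
rewrite /= /dist; split; lia.
Qed.

Definition nfree (free : {ffun V -> bool}) := #|[pred x | free x]|.

Lemma nfree_unmark (free : {ffun V -> bool}) (v : V) : free v -> nfree free = (nfree (unmark free v)).+1.
Proof.
move=> fv; rewrite /nfree (cardD1 v) inE fv add1n; congr _.+1.
apply: eq_card => x; rewrite !inE ffunE.
by case: eqP.
Qed.

Lemma loop_inv fuel : forall (free : {ffun V -> bool}) (st : seq V) pos cost, pos <= N ->
  let r := dfs_loop adj ord fuel free st pos cost in
  r.1.2 <= N /\ r.2 + 2 * N * nfree r.1.1 <= cost + 2 * N * nfree free.
Proof.
elim: fuel => [|f IH] free st pos cost hp /=.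
  by split.
case: st => [|v st]; first by split.
case fv: (free v); last by apply: IH.
have [h1 h2] := read_bound v pos hp.
case E: (read_cells adj ord v pos (list_addrs adj ord v)) h1 h2 => [[p c] ns] /= h1 h2.
have [i1 i2] := IH (unmark free v) (rev [seq w <- ns | unmark free v w] ++ st) p (cost + c) h1.
split => //.
rewrite (nfree_unmark free v fv).
apply: (leq_trans i2). lia.
Qed.

End Proof.

Theorem theorem7 :
  exists c : nat,
    forall (V : finType) (adj : V -> seq V),
      (forall v, uniq (adj v)) ->
      forall (ord outer : seq V),
        perm_eq ord (enum V) -> perm_eq outer (enum V) ->
        forall fuel : nat,
          dfs_ra_trace adj ord outer fuel <= c * #|V| * nedges adj.
Proof.
exists 2 => V adj _ ord outer pord _ fuel.
rewrite /dfs_ra_trace /dfs_ra_state.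
set N := nedges adj.
suff: forall s free pos cost, pos <= N ->
  let r := foldl (fun s u => let: (free, pos, cost) := s in
                   dfs_loop adj ord fuel free [:: u] pos cost) (free, pos, cost) s in
  r.1.2 <= N /\ r.2 + 2 * N * @nfree V r.1.1 <= cost + 2 * N * @nfree V free.
  move=> /(_ outer [ffun => true] 0 0 (leq0n _)) /= [_ h].
  have : @nfree V [ffun => true] <= #|V| by apply: max_card.
  move: h; set r := foldl _ _ _ => h hc.
  have : r.2 <= 2 * N * @nfree V [ffun => true] by lia.
  move=> h'; apply: (leq_trans h'); rewrite [2 * #|V| * N]mulnAC leq_mul2l; apply/orP; right; exact: hc.
elim => [|u s IH] free pos cost hp /=; first by split.
have [i1 i2] := @loop_inv V adj ord pord fuel free [:: u] pos cost hp.
case E: (dfs_loop adj ord fuel free [:: u] pos cost) i1 i2 => [[fr p] c] /= i1 i2.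
have [j1 j2] := IH fr p c i1.
split => //; lia.
Qed.
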